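(* Let $X_1,\dots,X_n$ be variables with ranges $D_1,\dots,D_n$ and let $A_1,\dots,A_m$ be events (sets of full assignments), $A_i$ depending only on the variables indexed by $\mathrm{vbl}(A_i)\subseteq[n]$. Let $G$ be the dependency graph on $[m]$ (distinct $i,j$ adjacent iff $\mathrm{vbl}(A_i)\cap\mathrm{vbl}(A_j)\neq\emptyset$). For an assignment $\sigma$, let $\mathrm{Res}(\sigma)$ be the output of the resampling-set selection procedure described in the context. Then for every $i\in\partial\,\mathrm{Res}(\sigma)$ we have $A_i\cap\sigma_{\mathrm{Res}(\sigma)}=\emptyset$.
   Context: Notation: $\mathrm{Bad}(\sigma)=\{i:\sigma\in A_i\}$; for $S\subseteq[m]$, $\partial S=\{i\notin S:\ i\text{ adjacent in }G\text{ to some }j\in S\}$ and $\mathrm{vbl}(S)=\bigcup_{i\in S}\mathrm{vbl}(A_i)$; $\sigma_S$ is the restriction of $\sigma$ to $\mathrm{vbl}(S)$. We write $A_i\cap\sigma_S=\emptyset$ if either $\mathrm{vbl}(A_i)\cap\mathrm{vbl}(S)=\emptyset$, or no assignment that agrees with $\sigma$ on $\mathrm{vbl}(A_i)\cap\mathrm{vbl}(S)$ belongs to $A_i$; otherwise $A_i\cap\sigma_S\ne\emptyset$. Selection procedure: start with $R=\mathrm{Bad}(\sigma)$ and $N=\emptyset$; while $\partial R\setminus N\neq\emptyset$, for each $i\in\partial R\setminus N$ (with $R$ the current set), add $i$ to $R$ if $A_i\cap\sigma_R\neq\emptyset$ and add $i$ to $N$ otherwise; when $\partial R\setminus N=\emptyset$,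 output $\mathrm{Res}(\sigma):=R$. *)

(* Defs.v *)
From mathcomp Require Import all_boot.
From Stdlib Require Import ClassicalEpsilon.

Set Implicit Arguments.
Unset Strict Implicit.
Unset Printing Implicit Defensive.

Definition asb (P : Prop) : bool :=
  if excluded_middle_informative P then true else false.

Section LLL.
Variables (n m : nat) (D : 'I_n -> Type).
Definition assignment := forall v : 'I_n, D v.
Variable A : 'I_m -> assignment -> Prop.
Variable vbl : 'I_m -> {set 'I_n}.

Definition agree_on (X : {set 'I_n}) (s t : assignment) : Prop :=
  forall v, v \in X -> s v = t v.
Definition depends_only : Prop :=
  forall i s t, agree_on (vbl i) s t -> (A i s <-> A i t).

Definition adj (i j : 'I_m) : bool :=
  (i != j) && ~~ [disjoint vbl i & vbl j].

Definition bdry (S : {set 'I_m}) : {set 'I_m} :=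
  [set i | (i \notin S) && [exists j in S, adj i j]].

Definition vblS (S : {set 'I_m}) : {set 'I_n} := \bigcup_(j in S) vbl j.

Definition cap_empty (i : 'I_m) (s : assignment) (S : {set 'I_m}) : Prop :=
  [disjoint vbl i & vblS S] \/
  ~ (exists t : assignment, agree_on (vbl i :&: vblS S) s t /\ A i t).

Definition Bad (s : assignment) : {set 'I_m} := [set i | asb (A i s)].

(* One round of the while loop: B := ∂R \ N (computed at the start of the
   round); each i ∈ B is processed in increasing index order, the test using
   the current R. *)
Definition round (s : assignment) (RN : {set 'I_m} * {set 'I_m})
    : {set 'I_m} * {set 'I_m} :=
  let B := bdry RN.1 :\: RN.2 in
  foldl (fun (rn : {set 'I_m} * {set 'I_m}) (i : 'I_m) =>
           if i \in B then
             (if asb (~ cap_empty i s rn.1) then (i |: rn.1, rn.2)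
              else (rn.1, i |: rn.2))
           else rn) RN (enum 'I_m).

Definition step (s : assignment) (RN : {set 'I_m} * {set 'I_m}) :=
  if bdry RN.1 :\: RN.2 == set0 then RN else round s RN.

(* Each non-terminal round adds at least one new index to R ∪ N (R, N
   disjoint subsets of [m]), so the loop stops after at most m rounds;
   m.+1 iterations of [step] therefore reach the output. *)
Definition Res (s : assignment) : {set 'I_m} :=
  (iter m.+1 (step s) (Bad s, set0)).1.

End LLL.

(* Main.v *)
Require Import Defs.
From mathcomp Require Import all_boot.
From Stdlib Require Import ClassicalEpsilon.

Set Implicit Arguments.
Unset Strict Implicit.
Unset Printing Implicit Defensive.

Section Aux.
Variables (n m : nat) (D : 'I_n -> Type) (A : 'I_m -> assignment D -> Prop)
  (vbl : 'I_m -> {set 'I_n}) (s : assignment D).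

Definition Inv (rn : {set 'I_m} * {set 'I_m}) := forall j, j \in rn.2 ->
  forall t, agree_on (vbl j :&: vblS vbl rn.1) s t -> ~ A j t.

Lemma vblS_mono (R R' : {set 'I_m}) : R \subset R' -> vblS vbl R \subset vblS vbl R'.
Proof.
move=> sub; apply/subsetP=> v /bigcupP[j jR vj]; apply/bigcupP; exists j => //.
exact: (subsetP sub).
Qed.

Lemma Inv_mono (R R' N : {set 'I_m}) : R \subset R' -> Inv (R,N) -> Inv (R',N).
Proof.
move=> sub I j jN t ag; apply: (I j jN t) => v /setIP[v1 v2]; apply: ag.
by rewrite inE v1 /=; exact: (subsetP (vblS_mono sub)).
Qed.

Lemma asbP (P : Prop) : asb P = true <-> P.
Proof. by rewrite /asb; case: excluded_middle_informative. Qed.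

Definition fr (RN : {set 'I_m} * {set 'I_m}) :=
  fun (rn : {set 'I_m} * {set 'I_m}) (i : 'I_m) =>
           if i \in bdry vbl RN.1 :\: RN.2 then
             (if asb (~ cap_empty A vbl i s rn.1) then (i |: rn.1, rn.2)
              else (rn.1, i |: rn.2))
           else rn.

Lemma fold_props (RN : {set 'I_m} * {set 'I_m}) : forall (l : seq 'I_m) (rn : {set 'I_m} * {set 'I_m}), RN.1 \subset rn.1 -> Inv rn ->
  let r := foldl (fr RN) rn l in
  [/\ rn.1 \subset r.1, rn.2 \subset r.2, Inv r &
    forall i, i \in l -> i \in bdry vbl RN.1 :\: RN.2 -> i \in r.1 :|: r.2].
Proof.
elim=> [|i l IH] rn sub inv /=; first by split.
case: rn sub inv => R N sub inv /=.
set rn' := fr RN (R, N) i.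
have [s1 s2 inv' hi] : [/\ R \subset rn'.1, N \subset rn'.2, Inv rn' &
    i \in bdry vbl RN.1 :\: RN.2 -> i \in rn'.1 :|: rn'.2].
  rewrite /rn' /fr; case: ifP => iB; last by split.
  case: ifP => hc /=.
    split => //; first exact: subsetUr.
      by apply: Inv_mono (subsetUr _ _) inv.
    by move=> _; rewrite !inE eqxx.
  split => //; first exact: subsetUr.
    move=> j; rewrite /= !inE => /orP[/eqP-> | jN]; last exact: inv.
    have hce : ~ ~ cap_empty A vbl i s R.
      by move=> h; have := proj2 (asbP (~ cap_empty A vbl i s R)) h; rewrite /= in hc; rewrite hc.
    move=> t ag Ait; apply: hce => -[dis | nex]; last by apply: nex; exists t.
    move: iB; rewrite !inE => /andP[_ /andP[_ /existsP[k /andP[kR]]]].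
    rewrite /adj => /andP[_ /pred0Pn[v /andP[v1 v2]]].
    have vS : v \in vblS vbl R.
      apply/bigcupP; exists k => //; exact: (subsetP sub).
    have v1' : v \in vbl i by [].
    move: dis; rewrite -setI_eq0 => /eqP E.
    by have := in_set0 v; rewrite -E inE v1' vS.
  by move=> _; rewrite !inE eqxx orbT.
have := IH rn' (subset_trans sub s1) inv'.
move=> [t1 t2 tinv thi]; split => //.
- exact: subset_trans t1.
- exact: subset_trans t2.
move=> j; rewrite inE => /orP[/eqP-> | jl] jB; last exact: thi.
move: (hi jB); rewrite !inE => /orP[h|h].
  by rewrite (subsetP t1 _ h).
by rewrite (subsetP t2 _ h) orbT.
Qed.

Lemma round_grows (RN : {set 'I_m} * {set 'I_m}) : Inv RN -> bdry vbl RN.1 :\: RN.2 != set0 ->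
  Inv (round A vbl s RN) /\
  #|RN.1 :|: RN.2| < #|(round A vbl s RN).1 :|: (round A vbl s RN).2|.
Proof.
move=> inv ne.
have -> : round A vbl s RN = foldl (fr RN) RN (enum 'I_m) by [].
have [s1 s2 I H] := fold_props (enum 'I_m) (subxx RN.1) inv.
split => //; apply: proper_card; apply/properP; split.
  exact: setUSS.
case/set0Pn: ne => i iB; exists i; first by apply: H; rewrite ?mem_enum.
move: iB; rewrite !inE => /andP[iN /andP[iR _]].
by rewrite negb_or iN iR.
Qed.

Lemma iter_props k : let x := iter k (step A vbl s) (Bad A s, set0) in
  Inv x /\ (bdry vbl x.1 :\: x.2 == set0 \/ k <= #|x.1 :|: x.2|).
Proof.
elim: k => [|k IH] /=.
  by split; [move=> j; rewrite inE | right].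
move: IH; set x := iter k _ _ => -[inv hx].
rewrite /step; case: ifP => e; first by split => //; left.
have [inv' gr] := round_grows inv (negbT e).
split => //; right; case: hx => [h|h]; first by rewrite h in e.
exact: leq_ltn_trans h gr.
Qed.

End Aux.

Theorem lemma23 (n m : nat) (D : 'I_n -> Type)
  (A : 'I_m -> assignment D -> Prop) (vbl : 'I_m -> {set 'I_n})
  (hdep : depends_only A vbl) (sigma : assignment D) :
  forall i : 'I_m, i \in bdry vbl (Res A vbl sigma) ->
    cap_empty A vbl i sigma (Res A vbl sigma).
Proof.
move=> i; rewrite /Res.
have [inv hx] := iter_props A vbl sigma m.+1.
move: inv hx; set x := iter _ _ _ => inv hx.
have e : bdry vbl x.1 :\: x.2 == set0.
  case: hx => // h; exfalso.
  have := max_card (mem (x.1 :|: x.2)); rewrite card_ord => h2.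
  by move: (leq_trans h h2); rewrite ltnn.
move=> ib; right => -[t [ag At]].
have iN : i \in x.2.
  apply/negPn/negP => iN; move/eqP: e => e.
  by have := in_set0 i; rewrite -e in_setD iN ib.
exact: (inv i iN t ag).
Qed.
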